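(* Let $F$ be the field of fractions of $R$, let $t_1,t_2$ be independent indeterminates, and work in $\mathrm{BB}_2\otimes_R F(t_1,t_2)$. Put $R_1(t)=-\delta t(t+q\lambda^{-1})+(t-1)(t+q\lambda^{-1})X_1+\delta t(t-1)e_1$ and $K(t)=\bigl(t^2q_1(1-t^2)^{-1}+Y\bigr)f_1(t)$, where $f_1$ is an arbitrary function with values in $F(t_1,t_2)$. Then the reflection equation $R_1(t_1/t_2)K(t_1)R_1(t_1t_2)K(t_2)=K(t_2)R_1(t_1t_2)K(t_1)R_1(t_1/t_2)$ holds.
   Context: $R$ is an integral domain with units $q,\lambda,x,q_0$ and elements $A,q_1$; $\delta=q-q^{-1}$; standing assumptions $x\delta=\delta-\lambda+\lambda^{-1}$, $q_0=q^{-1}$, $A(1-q_0\lambda)=q_1x$. $\mathrm{BB}_2$ is the unital $R$-algebra generated by invertible $Y,X_1$ and $e_1$ with relations $X_1e_1=e_1X_1=\lambda e_1$, $e_1^2=xe_1$, $X_1^{-1}=X_1-\delta+\delta e_1$, $X_1^2=1+\delta X_1-\delta\lambda e_1$, $X_1YX_1Y=YX_1YX_1$, $Y^2=q_1Y+q_0$, $YX_1Ye_1=e_1$, $e_1Ye_1=Ae_1$; it is assumed that $e_1\ne0$ with $re_1=0\Rightarrow r=0$ for $r\in R$, and $e_1,Ye_1$ linearly independent. *)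

(* Defs.v *)
From HB Require Import structures.
From mathcomp Require Import all_boot all_order all_algebra fraction.
Set Implicit Arguments. Unset Strict Implicit. Unset Printing Implicit Defensive.
Import GRing.Theory.
Local Open Scope ring_scope.

(* The field F(t1,t2), realised as the fraction field of R[t1][t2]
   ( = Frac(R[t1,t2]) = F(t1,t2) with F = Frac R ). *)
Definition Kt (R : idomainType) : fieldType := {fraction {poly {poly R}}}.

Definition embR (R : idomainType) (c : R) : Kt R := FracField.tofrac (c%:P%:P).

Definition t1 (R : idomainType) : Kt R := FracField.tofrac (('X : {poly R})%:P).
Definition t2 (R : idomainType) : Kt R := FracField.tofrac ('X : {poly {poly R}}).

Definition R1 (K : fieldType) (B : algType K) (q lam : K) (X1 e1 : B) (t : K) : B :=
  let d := q - q^-1 in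
  (- d * t * (t + q * lam^-1))%:A + ((t - 1) * (t + q * lam^-1)) *: X1
  + (d * t * (t - 1)) *: e1.

Definition Kmat (K : fieldType) (B : algType K) (q1 : K) (Y : B) (f1 : K -> K) (t : K) : B :=
  f1 t *: ((t ^+ 2 * q1 / (1 - t ^+ 2))%:A + Y).

(* Main.v *)
Require Import Defs.
From HB Require Import structures.
From mathcomp Require Import all_boot all_order all_algebra fraction.
From mathcomp Require Import ring ssrAC.
Import GRing.Theory.
Local Open Scope ring_scope.

Set Implicit Arguments. Unset Strict Implicit. Unset Printing Implicit Defensive.

Section Core.
Variable K : fieldType.
Variable B : algType K.
Variables (q lam x q0 A q1 d : K) (X Y E : B).
Hypothesis hX2 : X * X = 1 + d *: X - (d * lam) *: E.
Hypothesis hXE : X * E = lam *: E.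
Hypothesis hEX : E * X = lam *: E.
Hypothesis hEE : E * E = x *: E.
Hypothesis hYY : Y * Y = q1 *: Y + q0%:A.
Hypothesis hEYE : E * Y * E = A *: E.
Hypothesis hYXYE : Y * X * Y * E = E.
Hypothesis hEYXY : E * Y * X * Y = E.
Hypothesis hbraid : X * Y * X * Y = Y * X * Y * X.
Hypothesis hqq0 : q * q0 = 1.

Lemma hXYE : X * Y * E = q *: (Y * E) - (q * q1) *: E.
Proof.
have H1 : (q *: (Y * Y) - (q * q1) *: Y) = 1.
  by rewrite hYY scalerDr !scalerA addrAC subrr add0r hqq0 scale1r.
rewrite -[X * Y * E]mul1r -H1 mulrBl -!scalerAl !mulrA.
have -> : Y * Y * X * Y * E = Y * (Y * X * Y * E) by rewrite !mulrA.
by rewrite hYXYE.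
Qed.

Lemma hEYX : E * Y * X = q *: (E * Y) - (q * q1) *: E.
Proof.
have H1 : (q *: (Y * Y) - (q * q1) *: Y) = 1.
  by rewrite hYY scalerDr !scalerA addrAC subrr add0r hqq0 scale1r.
rewrite -[E * Y * X]mulr1 -H1 mulrBr -!scalerAr !mulrA hEYXY.
done.
Qed.
Definition TX (i j : nat) : K :=
  match i, j with
  | 0, 3 => (1)
  | 1, 1 => (lam)
  | 2, 1 => (- (q * q1))
  | 2, 2 => (q)
  | 3, 0 => (1)
  | 3, 1 => (- (d * lam))
  | 3, 3 => (d)
  | 4, 5 => (1)
  | 5, 1 => (d * lam * q * q1)
  | 5, 4 => (1)
  | 5, 5 => (d)
  | 5, 8 => (- (d * lam * q))
  | 6, 1 => (- (d * lam))
  | 6, 6 => (d)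
  | 6, 11 => (1)
  | 7, 10 => (1)
  | 8, 8 => (lam)
  | 9, 8 => (- (q * q1))
  | 9, 9 => (q)
  | 10, 7 => (1)
  | 10, 8 => (- (d * lam))
  | 10, 10 => (d)
  | 11, 6 => (1)
  | _, _ => 0 end.
Definition mulXv (v : nat -> K) (j : nat) : K :=
  match j with
  | 0 => (1) * v 3%N
  | 1 => (lam) * v 1%N + (- (q * q1)) * v 2%N + (- (d * lam)) * v 3%N + (d * lam * q * q1) * v 5%N + (- (d * lam)) * v 6%N
  | 2 => (q) * v 2%N
  | 3 => (1) * v 0%N + (d) * v 3%N
  | 4 => (1) * v 5%N
  | 5 => (1) * v 4%N + (d) * v 5%N
  | 6 => (d) * v 6%N + (1) * v 11%N
  | 7 => (1) * v 10%N
  | 8 => (- (d * lam * q)) * v 5%N + (lam) * v 8%N + (- (q * q1)) * v 9%N + (- (d * lam)) * v 10%N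
  | 9 => (q) * v 9%N
  | 10 => (1) * v 7%N + (d) * v 10%N
  | 11 => (1) * v 6%N
  | _ => 0 end.
Definition TY (i j : nat) : K :=
  match i, j with
  | 0, 7 => (1)
  | 1, 2 => (1)
  | 2, 1 => (q0)
  | 2, 2 => (q1)
  | 3, 4 => (1)
  | 4, 3 => (q0)
  | 4, 4 => (q1)
  | 5, 6 => (1)
  | 6, 5 => (q0)
  | 6, 6 => (q1)
  | 7, 0 => (q0)
  | 7, 7 => (q1)
  | 8, 9 => (1)
  | 9, 8 => (q0)
  | 9, 9 => (q1)
  | 10, 11 => (1)
  | 11, 10 => (q0)
  | 11, 11 => (q1)
  | _, _ => 0 end.
Definition mulYv (v : nat -> K) (j : nat) : K :=
  match j with
  | 0 => (q0) * v 7%N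
  | 1 => (q0) * v 2%N
  | 2 => (1) * v 1%N + (q1) * v 2%N
  | 3 => (q0) * v 4%N
  | 4 => (1) * v 3%N + (q1) * v 4%N
  | 5 => (q0) * v 6%N
  | 6 => (1) * v 5%N + (q1) * v 6%N
  | 7 => (1) * v 0%N + (q1) * v 7%N
  | 8 => (q0) * v 9%N
  | 9 => (1) * v 8%N + (q1) * v 9%N
  | 10 => (q0) * v 11%N
  | 11 => (1) * v 10%N + (q1) * v 11%N
  | _ => 0 end.
Definition TE (i j : nat) : K :=
  match i, j with
  | 0, 1 => (1)
  | 1, 1 => (x)
  | 2, 1 => (A)
  | 3, 1 => (lam)
  | 4, 1 => (- (q * q1))
  | 4, 8 => (q)
  | 5, 1 => (- (lam * q * q1))
  | 5, 8 => (lam * q)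
  | 6, 1 => (lam)
  | 7, 8 => (1)
  | 8, 8 => (x)
  | 9, 8 => (A)
  | 10, 8 => (lam)
  | 11, 1 => (1)
  | _, _ => 0 end.
Definition mulEv (v : nat -> K) (j : nat) : K :=
  match j with
  | 0 => 0
  | 1 => (1) * v 0%N + (x) * v 1%N + (A) * v 2%N + (lam) * v 3%N + (- (q * q1)) * v 4%N + (- (lam * q * q1)) * v 5%N + (lam) * v 6%N + (1) * v 11%N
  | 2 => 0
  | 3 => 0
  | 4 => 0
  | 5 => 0
  | 6 => 0
  | 7 => 0
  | 8 => (q) * v 4%N + (lam * q) * v 5%N + (1) * v 7%N + (x) * v 8%N + (A) * v 9%N + (lam) * v 10%N
  | 9 => 0
  | 10 => 0
  | 11 => 0
  | _ => 0 end.
Definition w (n : nat) : B :=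
  match n with
  | 0 => 1 | 1 => E | 2 => E * Y | 3 => X | 4 => X * Y | 5 => X * Y * X
  | 6 => X * Y * X * Y | 7 => Y | 8 => Y * E | 9 => Y * E * Y | 10 => Y * X
  | 11 => Y * X * Y | _ => 0 end.
Definition lc (v : nat -> K) : B := \sum_(j < 12) v j *: w j.

Lemma rowX i : (i < 12)%N -> w i * X = lc (TX i).
Proof.
rewrite /lc; case: i => [|[|[|[|[|[|[|[|[|[|[|[|i]]]]]]]]]]]] // _; rewrite !big_ord_recl big_ord0 /= !scale0r ?add0r ?addr0 ?scale1r.
- by rewrite mul1r.
- by rewrite hEX.
- by rewrite hEYX addrC scaleNr.
- by rewrite hX2 scaleNr -addrA [- _ + _]addrC.
- by [].
- rewrite -mulrA hX2 !mulrDr mulrN mulr1 -!scalerAr hXYE scalerBr !scalerA opprB !mulrA.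
  by rewrite scaleNr !addrA [LHS](ACl (3*1*2*4)).
- rewrite hbraid -mulrA hX2 !mulrDr mulrN mulr1 -!scalerAr hYXYE -hbraid.
  by rewrite scaleNr !addrA [LHS](ACl (3*2*1)).
- by [].
- by rewrite -mulrA hEX -scalerAr.
- have -> : Y * E * Y * X = Y * (E * Y * X) by rewrite !mulrA.
  by rewrite hEYX mulrBr -!scalerAr !mulrA addrC scaleNr.
- rewrite -mulrA hX2 !mulrDr mulrN mulr1 -!scalerAr.
  by rewrite scaleNr -addrA [- _ + _]addrC.
- by rewrite hbraid.
Qed.

Lemma rowY i : (i < 12)%N -> w i * Y = lc (TY i).
Proof.
rewrite /lc; case: i => [|[|[|[|[|[|[|[|[|[|[|[|i]]]]]]]]]]]] // _; rewrite !big_ord_recl big_ord0 /= !scale0r ?add0r ?addr0 ?scale1r.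
- by rewrite mul1r.
- by [].
- by rewrite -mulrA hYY mulrDr -scalerAr mulr_algr addrC.
- by [].
- by rewrite -mulrA hYY mulrDr -scalerAr mulr_algr addrC.
- by [].
- by rewrite -mulrA hYY mulrDr -scalerAr mulr_algr addrC.
- by rewrite hYY addrC.
- by [].
- by rewrite -mulrA hYY mulrDr -scalerAr mulr_algr addrC.
- by [].
- by rewrite -mulrA hYY mulrDr -scalerAr mulr_algr addrC.
Qed.
Lemma rowE i : (i < 12)%N -> w i * E = lc (TE i).
Proof.
rewrite /lc; case: i => [|[|[|[|[|[|[|[|[|[|[|[|i]]]]]]]]]]]] // _; rewrite !big_ord_recl big_ord0 /= !scale0r ?add0r ?addr0 ?scale1r.
- by rewrite mul1r.
- by rewrite hEE.
- by rewrite hEYE.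
- by rewrite hXE.
- by rewrite hXYE addrC scaleNr.
- by rewrite -mulrA hXE -scalerAr hXYE scalerBr !scalerA addrC scaleNr !mulrA.
- have -> : X * Y * X * Y * E = X * (Y * X * Y * E) by rewrite !mulrA.
  by rewrite hYXYE hXE.
- by [].
- by rewrite -mulrA hEE -scalerAr.
- have -> : Y * E * Y * E = Y * (E * Y * E) by rewrite !mulrA.
  by rewrite hEYE -scalerAr.
- by rewrite -mulrA hXE -scalerAr.
- by rewrite hYXYE.
Qed.

Lemma lc_ext u v : (forall j, (j < 12)%N -> u j = v j) -> lc u = lc v.
Proof. by move=> H; apply: eq_bigr => j _; rewrite H. Qed.

Lemma lc_mul (T : nat -> nat -> K) g :
  (forall i, (i < 12)%N -> w i * g = lc (T i)) ->
  forall v, lc v * g = lc (fun j => \sum_(i < 12) v i * T i j).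
Proof.
move=> HT v; rewrite /lc mulr_suml.
rewrite (eq_bigr (fun i : 'I_12 => \sum_(j < 12) (v i * T i j) *: w j)); last first.
  move=> i _; rewrite -scalerAl HT // /lc scaler_sumr; apply: eq_bigr => j _.
  by rewrite scalerA.
by rewrite exchange_big /=; apply: eq_bigr => j _; rewrite scaler_suml.
Qed.

Ltac expand_col := case=> [|[|[|[|[|[|[|[|[|[|[|[|j]]]]]]]]]]]] // _;
  rewrite !big_ord_recl big_ord0 /=; ring.

Lemma mulX_lc v : lc v * X = lc (mulXv v).
Proof. by rewrite (lc_mul rowX); apply: lc_ext; expand_col. Qed.
Lemma mulY_lc v : lc v * Y = lc (mulYv v).
Proof. by rewrite (lc_mul rowY); apply: lc_ext; expand_col. Qed.
Lemma mulE_lc v : lc v * E = lc (mulEv v).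
Proof. by rewrite (lc_mul rowE); apply: lc_ext; expand_col. Qed.

Lemma lcD u v : lc u + lc v = lc (fun j => u j + v j).
Proof. by rewrite /lc -big_split /=; apply: eq_bigr => j _; rewrite scalerDl. Qed.
Lemma lcZ k v : k *: lc v = lc (fun j => k * v j).
Proof. by rewrite /lc scaler_sumr; apply: eq_bigr => j _; rewrite scalerA. Qed.

Definition mulG k0 k1 k2 k3 (v : nat -> K) (j : nat) : K :=
  k0 * v j + k1 * mulXv v j + k2 * mulYv v j + k3 * mulEv v j.

Lemma mulG_lc k0 k1 k2 k3 v :
  lc v * (k0%:A + k1 *: X + k2 *: Y + k3 *: E) = lc (mulG k0 k1 k2 k3 v).
Proof.
rewrite !mulrDr mulr_algr -!scalerAr mulX_lc mulY_lc mulE_lc !lcZ !lcD.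
by apply: lc_ext.
Qed.

Definition e0 (j : nat) : K := if j is 0 then 1 else 0.
Lemma lc1 : lc e0 = 1.
Proof. by rewrite /lc !big_ord_recl big_ord0 /= scale1r !scale0r !addr0. Qed.

Lemma coreL r0 r1 r2 c1 s0 s1 s2 c2 :
  (r0%:A + r1 *: X + r2 *: E) * (c1%:A + Y) * (s0%:A + s1 *: X + s2 *: E) * (c2%:A + Y)
  = lc (mulG c2 0 1 0 (mulG s0 s1 0 s2 (mulG c1 0 1 0 (mulG r0 r1 0 r2 e0)))).
Proof.
have HR k0 k1 k2 : k0%:A + k1 *: X + k2 *: E = k0%:A + k1 *: X + 0 *: Y + k2 *: E.
  by rewrite scale0r addr0.
have HK c : c%:A + Y = c%:A + 0 *: X + 1 *: Y + 0 *: E.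
  by rewrite !scale0r scale1r !addr0.
rewrite !HR !HK -(mul1r (r0%:A + _ + _ + _)) -{1}lc1.
by rewrite !mulG_lc.
Qed.

Lemma coreR r0 r1 r2 c1 s0 s1 s2 c2 :
  (c2%:A + Y) * (s0%:A + s1 *: X + s2 *: E) * (c1%:A + Y) * (r0%:A + r1 *: X + r2 *: E)
  = lc (mulG r0 r1 0 r2 (mulG c1 0 1 0 (mulG s0 s1 0 s2 (mulG c2 0 1 0 e0)))).
Proof.
have HR k0 k1 k2 : k0%:A + k1 *: X + k2 *: E = k0%:A + k1 *: X + 0 *: Y + k2 *: E.
  by rewrite scale0r addr0.
have HK c : c%:A + Y = c%:A + 0 *: X + 1 *: Y + 0 *: E.
  by rewrite !scale0r scale1r !addr0.
rewrite !HR !HK -(mul1r (c2%:A + _ + _ + _)) -{1}lc1.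
by rewrite !mulG_lc.
Qed.

Variables (t1 t2 : K).
Definition rr0 t := - d * t * (t + q * lam^-1).
Definition rr1 t := (t - 1) * (t + q * lam^-1).
Definition rr2 t := d * t * (t - 1).
Definition cc t := t ^+ 2 * q1 / (1 - t ^+ 2).

Definition VL := mulG (cc t2) 0 1 0 (mulG (rr0 (t1 * t2)) (rr1 (t1 * t2)) 0 (rr2 (t1 * t2))
   (mulG (cc t1) 0 1 0 (mulG (rr0 (t1 / t2)) (rr1 (t1 / t2)) 0 (rr2 (t1 / t2)) e0))).
Definition VR := mulG (rr0 (t1 / t2)) (rr1 (t1 / t2)) 0 (rr2 (t1 / t2)) (mulG (cc t1) 0 1 0
   (mulG (rr0 (t1 * t2)) (rr1 (t1 * t2)) 0 (rr2 (t1 * t2)) (mulG (cc t2) 0 1 0 e0))).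

Lemma final (hq : q != 0) (hl : lam != 0) (hql : q - lam != 0) (hqq : q * q - 1 != 0)
  (ht2 : t2 != 0) (h1 : 1 - t1 ^+ 2 != 0) (h2 : 1 - t2 ^+ 2 != 0)
  (hq0 : q0 = q^-1) (hd : d = q - q^-1) (hx : x = (d - lam + lam^-1) / d)
  (hA : A = q1 * x / (1 - q0 * lam)) j : (j < 12)%N -> VL j = VR j.
Proof.
rewrite /VL /VR /mulG /mulXv /mulYv /mulEv /e0 /rr0 /rr1 /rr2 /cc hA hx hq0 hd.
case: j => [|[|[|[|[|[|[|[|[|[|[|[|j]]]]]]]]]]]] // _ /=; field;
  by rewrite ?hq ?hl ?hql ?hqq ?ht2 ?h1 ?h2.
Qed.

Lemma reflection (hq : q != 0) (hl : lam != 0) (hql : q - lam != 0) (hqq : q * q - 1 != 0)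
  (ht2 : t2 != 0) (h1 : 1 - t1 ^+ 2 != 0) (h2 : 1 - t2 ^+ 2 != 0)
  (hq0 : q0 = q^-1) (hd : d = q - q^-1) (hx : x = (d - lam + lam^-1) / d)
  (hA : A = q1 * x / (1 - q0 * lam)) :
  let Rt t := (rr0 t)%:A + rr1 t *: X + rr2 t *: E in
  let Kt t := (cc t)%:A + Y in
  Rt (t1 / t2) * Kt t1 * Rt (t1 * t2) * Kt t2 = Kt t2 * Rt (t1 * t2) * Kt t1 * Rt (t1 / t2).
Proof.
move=> Rt Kt; rewrite /Rt /Kt coreL coreR; apply: lc_ext => j; exact: final.
Qed.
End Core.

Lemma derive_EYXY (K : fieldType) (B : algType K) (X Y E Xi : B) (lam d x : K) :
  d != 0 -> lam != 0 ->
  X * X = 1 + d *: X - (d * lam) *: E -> X * E = lam *: E -> E * X = lam *: E ->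
  E * E = x *: E -> x * d = d - lam + lam^-1 -> X * Xi = 1 -> Xi = X - d%:A + d *: E ->
  X * Y * X * Y = Y * X * Y * X -> Y * X * Y * E = E -> E * Y * X * Y = E.
Proof.
move=> hd hl hX2 hXE hEX hEE hx hXi hXiE hbraid hYXYE.
set Z := Y * X * Y * X.
have ZX : Z * X = X * Z by rewrite /Z !mulrA -hbraid.
have ZXX : Z * (X * X) = X * X * Z by rewrite mulrA ZX -mulrA ZX mulrA.
have HE : E = (d * lam)^-1 *: (1 + d *: X - X * X).
  rewrite hX2 opprB addrC subrK scalerA mulVf ?scale1r //.
  by rewrite mulf_neq0.
have ZE : Z * E = E * Z.
  rewrite HE -scalerAl -scalerAr; congr (_ *: _).
  rewrite !mulrDr !mulrDl mulr1 mul1r !mulrN !mulNr -scalerAl -scalerAr ZX ZXX.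
  by [].
have ZE2 : Z * E = lam *: E.
  by rewrite /Z -mulrA hXE -scalerAr hYXYE.
have -> : E * Y * X * Y = E * Y * X * Y * (X * Xi) by rewrite hXi mulr1.
rewrite !mulrA -/Z.
have -> : E * Y * X * Y * X = E * Z by rewrite /Z !mulrA.
rewrite -ZE ZE2 -scalerAl hXiE !mulrDr mulrN mulr_algr -scalerAr hEX hEE.
rewrite !scalerA -!scalerBl -scalerDl scalerA.
suff -> : lam * (lam - d + d * x) = 1 by rewrite scale1r.
rewrite [d * x]mulrC hx; field; done.
Qed.

Lemma degen (K : fieldType) (B : algType K) (X Y : B) (c1 c2 : K) :
  X * X = 1 -> X * Y * X * Y = Y * X * Y * X ->
  X * (c1%:A + Y) * X * (c2%:A + Y) = (c2%:A + Y) * X * (c1%:A + Y) * X.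
Proof.
move=> hX2 hb.
rewrite !mulrDr !mulrDl !mulr_algr !mulr_algl -!scalerAl !scalerA -[Y * X * X]mulrA.
rewrite !hX2 mul1r mulr1 hb [c2 * c1]mulrC.
by rewrite !addrA [LHS](ACl (1*3*2*4)).
Qed.

Section Emb.
Variable R : idomainType.
Lemma embRD (a b : R) : embR (a + b) = embR a + embR b.
Proof. by rewrite /embR !rmorphD. Qed.
Lemma embRN (a : R) : embR (- a) = - embR a.
Proof. by rewrite /embR !rmorphN. Qed.
Lemma embRB (a b : R) : embR (a - b) = embR a - embR b.
Proof. by rewrite embRD embRN. Qed.
Lemma embRM (a b : R) : embR (a * b) = embR a * embR b.
Proof. by rewrite /embR !rmorphM. Qed.
Lemma embR1 : embR (1 : R) = 1.
Proof. by rewrite /embR !rmorph1. Qed.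
Lemma embR_eq0 (a : R) : (embR a == 0) = (a == 0).
Proof. by rewrite /embR tofrac_eq0 !polyC_eq0. Qed.
Lemma embRV (a : R) : a \is a GRing.unit -> embR a^-1 = (embR a)^-1.
Proof.
move=> ua; have h : embR a * embR a^-1 = 1 by rewrite -embRM mulrV // embR1.
have na : embR a != 0 by rewrite embR_eq0; apply/eqP => a0; move: ua; rewrite a0 unitr0.
by rewrite -[embR a^-1]mul1r -(mulVf na) -mulrA h mulr1.
Qed.
Lemma embR_neq0 (a : R) : a \is a GRing.unit -> embR a != 0.
Proof. by move=> ua; rewrite embR_eq0; apply/eqP => a0; move: ua; rewrite a0 unitr0. Qed.

Lemma t2_neq0 : t2 R != 0.
Proof. by rewrite /t2 tofrac_eq0 polyX_eq0. Qed.
Lemma t1sq : 1 - t1 R ^+ 2 != 0.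
Proof.
rewrite /t1 -rmorphXn -(rmorph1 (@FracField.tofrac _)) -rmorphB tofrac_eq0.
apply/eqP => /(congr1 (fun p => p.[0].[0])); rewrite !hornerE /= expr0n /= subr0.
by move/eqP; rewrite oner_eq0.
Qed.
Lemma t2sq : 1 - t2 R ^+ 2 != 0.
Proof.
rewrite /t2 -rmorphXn -(rmorph1 (@FracField.tofrac _)) -rmorphB tofrac_eq0.
apply/eqP => /(congr1 (fun p => p.[0])); rewrite !hornerE /= expr0n /= subr0.
by move/eqP; rewrite oner_eq0.
Qed.
End Emb.

Unset Implicit Arguments. Set Strict Implicit.

Lemma pull4 (K : fieldType) (B : algType K) (a b c e : B) (f g : K) :
  a * (f *: b) * c * (g *: e) = (f * g) *: (a * b * c * e).
Proof. by repeat (rewrite -scalerAr || rewrite -scalerAl); rewrite scalerA mulrC. Qed.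
Lemma pull4' (K : fieldType) (B : algType K) (a b c e : B) (f g : K) :
  (f *: a) * b * (g *: c) * e = (f * g) *: (a * b * c * e).
Proof. by repeat (rewrite -scalerAr || rewrite -scalerAl); rewrite scalerA mulrC. Qed.

Lemma main_gen (K : fieldType) (B : algType K) (Q L Xs As Q0 Q1 T1 T2 : K)
  (X1 Y e1 : B) (f1 : K -> K) :
  Q != 0 -> L != 0 -> Xs != 0 -> Q0 = Q^-1 ->
  X1 * (X1 - (Q - Q^-1)%:A + (Q - Q^-1) *: e1) = 1 ->
  X1 * e1 = L *: e1 -> e1 * X1 = L *: e1 -> e1 * e1 = Xs *: e1 ->
  X1 * X1 = 1 + (Q - Q^-1) *: X1 - ((Q - Q^-1) * L) *: e1 ->
  X1 * Y * X1 * Y = Y * X1 * Y * X1 ->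
  Y * Y = Q1 *: Y + Q0%:A -> Y * X1 * Y * e1 = e1 -> e1 * Y * e1 = As *: e1 ->
  Xs * (Q - Q^-1) = (Q - Q^-1) - L + L^-1 -> As * (1 - Q0 * L) = Q1 * Xs ->
  T2 != 0 -> 1 - T1 ^+ 2 != 0 -> 1 - T2 ^+ 2 != 0 ->
  let Rm := R1 Q L X1 e1 in
  let Km := Kmat Q1 Y f1 in
  Rm (T1 / T2) * Km T1 * Rm (T1 * T2) * Km T2
  = Km T2 * Rm (T1 * T2) * Km T1 * Rm (T1 / T2).
Proof.
set d := Q - Q^-1.
move=> hq hl hxn hq0 hXi1 HX1e1 He1X1 He1sq hX2 Hbraid HYsq HYX1Ye1 He1Ye1 hx hA ht2 h1 h2 Rm Km.
rewrite /Rm /Km /R1 /Kmat -/d pull4 pull4' [f1 T2 * _]mulrC; congr (_ *: _).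
have [d0|dn] := eqVneq d 0.
  have hX2' : X1 * X1 = 1 by rewrite hX2 d0 mul0r !scale0r subr0 addr0.
  rewrite d0 oppr0 !mul0r !scale0r !add0r !addr0.
  rewrite pull4 pull4' mulrC mulrCA; congr (_ *: _).
  exact: degen hX2' Hbraid.
have hEYXY := derive_EYXY dn hl hX2 HX1e1 He1X1 He1sq hx hXi1 erefl Hbraid HYX1Ye1.
have hqq0 : Q * Q0 = 1 by rewrite hq0 mulfV.
have hql : Q - L != 0.
  apply/eqP => /eqP; rewrite subr_eq0 => /eqP hQL.
  have h0 : d - Q + Q^-1 = 0 by rewrite /d addrAC subrK subrr.
  move: hx; rewrite -/d -hQL h0 => /eqP.
  by rewrite mulf_eq0 (negbTE hxn) (negbTE dn).
have hqq : Q * Q - 1 != 0.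
  have -> : Q * Q - 1 = Q * d by rewrite /d mulrBr mulfV.
  by rewrite mulf_neq0.
have hql' : 1 - Q0 * L != 0.
  have -> : 1 - Q0 * L = Q^-1 * (Q - L) by rewrite hq0 mulrBr mulVf.
  by rewrite mulf_neq0 ?invr_eq0.
have hA' : As = Q1 * Xs / (1 - Q0 * L) by rewrite -hA mulfK.
have hx' : Xs = (d - L + L^-1) / d by rewrite -hx mulfK.
exact: (reflection hX2 HX1e1 He1X1 He1sq HYsq He1Ye1 HYX1Ye1 hEYXY Hbraid hqq0
  hq hl hql hqq ht2 h1 h2 hq0 erefl hx' hA').
Qed.

Theorem proposition20 (R : idomainType) (q lam x q0 A q1 : R)
  (Uq : q \is a GRing.unit) (Ulam : lam \is a GRing.unit)
  (Ux : x \is a GRing.unit) (Uq0 : q0 \is a GRing.unit)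
  (Hx : x * (q - q^-1) = (q - q^-1) - lam + lam^-1)
  (Hq0 : q0 = q^-1)
  (HA : A * (1 - q0 * lam) = q1 * x)
  (B : algType (Kt R)) (Y X1 e1 : B)
  (HYinv : exists Yi : B, Y * Yi = 1 /\ Yi * Y = 1)
  (HX1inv : X1 * (X1 - (embR (q - q^-1))%:A + embR (q - q^-1) *: e1) = 1 /\
            (X1 - (embR (q - q^-1))%:A + embR (q - q^-1) *: e1) * X1 = 1)
  (HX1e1 : X1 * e1 = embR lam *: e1) (He1X1 : e1 * X1 = embR lam *: e1)
  (He1sq : e1 * e1 = embR x *: e1)
  (HX1sq : X1 * X1 = 1 + embR (q - q^-1) *: X1 - embR ((q - q^-1) * lam) *: e1)
  (Hbraid : X1 * Y * X1 * Y = Y * X1 * Y * X1)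
  (HYsq : Y * Y = embR q1 *: Y + (embR q0)%:A)
  (HYX1Ye1 : Y * X1 * Y * e1 = e1)
  (He1Ye1 : e1 * Y * e1 = embR A *: e1)
  (He1nz : e1 != 0)
  (Hindep : forall r s : Kt R, r *: e1 + s *: (Y * e1) = 0 -> r = 0 /\ s = 0)
  (f1 : Kt R -> Kt R) :
  let Rm := R1 (embR q) (embR lam) X1 e1 in
  let Km := Kmat (embR q1) Y f1 in
  Rm (t1 R / t2 R) * Km (t1 R) * Rm (t1 R * t2 R) * Km (t2 R)
  = Km (t2 R) * Rm (t1 R * t2 R) * Km (t1 R) * Rm (t1 R / t2 R).
Proof.
have Ed : embR (q - q^-1) = embR q - (embR q)^-1 by rewrite embRB embRV.
have hq0 : embR q0 = (embR q)^-1 by rewrite Hq0 embRV.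
have hX2 : X1 * X1 = 1 + (embR q - (embR q)^-1) *: X1 - ((embR q - (embR q)^-1) * embR lam) *: e1.
  by rewrite HX1sq embRM Ed.
have hx : embR x * (embR q - (embR q)^-1) = (embR q - (embR q)^-1) - embR lam + (embR lam)^-1.
  by rewrite -Ed -embRM Hx !embRD !embRN !embRV.
have hA : embR A * (1 - embR q0 * embR lam) = embR q1 * embR x.
  by rewrite -embRM -embR1 -embRB -embRM HA embRM.
have [hXi1 _] := HX1inv; rewrite Ed in hXi1.
have H := (@main_gen _ _ _ _ _ _ _ _ _ _ _ _ _ f1 (embR_neq0 Uq) (embR_neq0 Ulam) (embR_neq0 Ux) hq0 hXi1 HX1e1 He1X1
  He1sq hX2 Hbraid HYsq HYX1Ye1 He1Ye1 hx hA (t2_neq0 R) (t1sq R) (t2sq R)).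
exact: H.
Qed.
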